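(* Let $n\ge 3$. For $3\le i\le n$ let $R_i=\{(1\,2)(k\,i)\mid 1\le k<i\}\cup\{e\}\subseteq A_i\subseteq A_n$. Then every $v\in A_n$ can be written as $v=v_3v_4\cdots v_n$ with $v_i\in R_i$ for each $3\le i\le n$, and these elements $v_3,\dots,v_n$ are uniquely determined by $v$.
   Context: $S_n$ is the symmetric group on $[n]=\{1,\dots,n\}$, $A_n$ the alternating group (even permutations), and $e$ the identity. For $m\le n$, $S_m$ (and $A_m$) is regarded as the subgroup of $S_n$ fixing $m+1,\dots,n$. Products are compositions of permutations, with the rightmost factor applied first; $(k\,i)$ denotes a transposition, and $(1\,2)(1\,i)$, $(1\,2)(2\,i)$ are 3-cycles. *)

(* Defs.v *)
From mathcomp Require Import all_boot all_fingroup.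
Set Implicit Arguments. Unset Strict Implicit. Unset Printing Implicit Defensive.
Local Open Scope group_scope.

(* Points 1..n of the paper are the ordinals 0..n-1 of 'I_n; the paper's
   point j corresponds to the ordinal with value j-1. So paper's i with
   3 <= i <= n is an ordinal i : 'I_n with 2 <= i, paper's "1" is the
   ordinal of value 0 and paper's "2" the ordinal of value 1. *)

(* The paper composes right-to-left,
   so (1 2)(k i) is "first (k i), then (1 2)", which in MathComp's
   left-to-right permutation product is  tperm k i * tperm a b. *)
Definition Rset (n : nat) (i : 'I_n) : {set {perm 'I_n}} :=
  [set s : {perm 'I_n} | (s == 1) ||
     [exists k : 'I_n, exists a : 'I_n, exists b : 'I_n,
        [&& (val k < val i)%N, (val a == 0)%N, (val b == 1)%N & s == tperm k i * tperm a b]]].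

(* The paper's product v_3 v_4 ... v_n (rightmost factor applied first),
   i.e. x |-> v_3 (v_4 ( ... (v_n x))).  In MathComp ((s * t) x = t (s x))
   this is v_n * v_(n-1) * ... * v_3. *)
Definition paper_prod (n : nat) (f : 'I_n -> {perm 'I_n}) : {perm 'I_n} :=
  \prod_(i <- rev (enum 'I_n) | (2 <= val i)%N) f i.

(* Main.v *)
Require Import Defs.
From mathcomp Require Import all_boot all_fingroup.
From mathcomp Require Import zify.
Set Implicit Arguments. Unset Strict Implicit. Unset Printing Implicit Defensive.
Local Open Scope group_scope.

Definition Dm (n m : nat) : seq 'I_n :=
  [seq x : 'I_n <- rev (enum 'I_n) | (2 <= x)%N && (x < m)%N].
Definition Pm (n m : nat) (f : 'I_n -> {perm 'I_n}) : {perm 'I_n} :=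
  \prod_(i <- Dm n m) f i.
Lemma ord_eqn n (x y : 'I_n) : (nat_of_ord x == nat_of_ord y) = (x == y). Proof. by []. Qed.

Lemma neq_ord n (x y : 'I_n) : nat_of_ord x <> nat_of_ord y -> x != y.
Proof. by move=> h; apply/eqP => e; apply: h; rewrite e. Qed.

Definition gt_ord n : rel 'I_n := fun x y => (val y < val x)%N.

Lemma gt_trans n : transitive (@gt_ord n).
Proof. move=> y x z; rewrite /gt_ord; lia. Qed.

Lemma sorted_rev_enum n : sorted (@gt_ord n) (rev (enum 'I_n)).
Proof.
rewrite rev_sorted.
have := iota_ltn_sorted 0 n; rewrite -val_enum_ord sorted_map.
by [].
Qed.

Lemma Dm_sorted n m : sorted (@gt_ord n) (Dm n m).
Proof. apply: sorted_filter; [exact: gt_trans | exact: sorted_rev_enum]. Qed.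

Lemma mem_Dm n m x : (x \in Dm n m) = (2 <= x)%N && (x < m)%N.
Proof. by rewrite mem_filter mem_rev mem_enum andbT. Qed.

Lemma Dm_step n (i : 'I_n) : (2 <= i)%N -> Dm n i.+1 = i :: Dm n i.
Proof.
move=> hi; apply: (@irr_sorted_eq _ (@gt_ord n)).
- exact: gt_trans.
- move=> x; rewrite /gt_ord; lia.
- exact: Dm_sorted.
- rewrite /= path_sortedE; last exact: gt_trans.
  rewrite Dm_sorted andbT; apply/allP => x; rewrite mem_Dm /gt_ord; move=> /andP[_ h]; exact: h.
- move=> x; rewrite inE !mem_Dm -ord_eqn /=.
  case: (eqVneq x i) => [->|ne] /=; first lia.
  have : nat_of_ord x != nat_of_ord i by []. lia.
Qed.

Lemma Dm_small n m : (m <= 2)%N -> Dm n m = [::].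
Proof.
move=> h; case E: (Dm n m) => [//|x s].
have : x \in Dm n m by rewrite E inE eqxx.
rewrite mem_Dm; lia.
Qed.

Lemma Pm_step n (i : 'I_n) f : (2 <= i)%N -> Pm i.+1 f = f i * Pm i f.
Proof. by move=> hi; rewrite /Pm Dm_step // big_cons. Qed.

Lemma paper_Pm n (f : 'I_n -> {perm 'I_n}) : paper_prod f = Pm n f.
Proof.
rewrite /paper_prod /Pm /Dm big_filter; apply: eq_bigl => x.
by rewrite ltn_ord andbT.
Qed.

Lemma Rset_fix n (j : 'I_n) r (x : 'I_n) : r \in Rset j -> (j < x)%N -> r x = x.
Proof.
rewrite inE => /orP[/eqP -> | /existsP[k /existsP[a /existsP[b /and4P[hk ha hb /eqP ->]]]]] hx.
  by rewrite perm1.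
rewrite /= in hk ha hb.
have e1 : tperm k j x = x by apply: tpermD; apply: neq_ord; lia.
rewrite permM e1; apply: tpermD; apply: neq_ord; lia.
Qed.

Lemma Pm_fix n m (f : 'I_n -> {perm 'I_n}) (x : 'I_n) :
  (forall i : 'I_n, (2 <= i)%N -> f i \in Rset i) -> (m <= x)%N -> Pm m f x = x.
Proof.
move=> hf hx; rewrite /Pm big_seq; apply/eqP.
apply: (big_ind (fun s : {perm 'I_n} => s x == x)).
- by rewrite perm1.
- by move=> s t /eqP hs /eqP ht; rewrite permM hs ht.
- move=> j; rewrite mem_Dm => /andP[h2 hjm]; apply/eqP.
  apply: (Rset_fix (hf j h2)); lia.
Qed.

Lemma even_fix2 n (v : {perm 'I_n}) : ~~ odd_perm v ->
  (forall x : 'I_n, (2 <= x)%N -> v x = x) -> v = 1.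
Proof.
move=> hv hf; apply/permP => x; rewrite perm1; apply/eqP; apply/negPn/negP => hx.
have hlt : forall y : 'I_n, (y < 2)%N -> (v y < 2)%N.
  move=> y hy; rewrite ltnNge; apply/negP => h.
  have := hf _ h; move/perm_inj => e; rewrite e in h; lia.
have hx2 : (x < 2)%N.
  by rewrite ltnNge; apply/negP => h; rewrite hf // eqxx in hx.
have hvx := hlt _ hx2.
have h1 : nat_of_ord (v x) != nat_of_ord x by rewrite ord_eqn.
have e : v = tperm x (v x).
  apply/permP => y; case: (tpermP x (v x) y) => [->| -> | ne1 ne2].
  - by [].
  - have h2 : nat_of_ord (v (v x)) != nat_of_ord (v x).
      by rewrite ord_eqn; apply/eqP => /perm_inj e; rewrite e eqxx in hx.
    have := hlt _ hvx => h3.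
    apply: val_inj => /=; lia.
  - case: (leqP 2 y) => hy; first by rewrite hf.
    exfalso.
    have : nat_of_ord y != nat_of_ord x by rewrite ord_eqn; apply/eqP.
    have : nat_of_ord y != nat_of_ord (v x) by rewrite ord_eqn; apply/eqP.
    lia.
move: hv; rewrite e odd_tperm.
by rewrite eq_sym hx.
Qed.

Lemma exist_m n (m : nat) : (m <= n)%N -> forall v : {perm 'I_n}, ~~ odd_perm v ->
  (forall x : 'I_n, (m <= x)%N -> v x = x) ->
  exists f : 'I_n -> {perm 'I_n},
    (forall i : 'I_n, (2 <= i)%N -> f i \in Rset i) /\ v = Pm m f.
Proof.
elim: m => [|m IH] hmn v hv hfix.
  exists (fun _ => 1); split; first by move=> i _; rewrite inE eqxx.
  rewrite /Pm Dm_small // big_nil; apply: even_fix2 => // x _; exact: hfix.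
case: (leqP m.+1 2) => h2.
  exists (fun _ => 1); split; first by move=> i _; rewrite inE eqxx.
  rewrite /Pm Dm_small // big_nil; apply: even_fix2 => // x hx; apply: hfix; lia.
have hm : (m < n)%N by lia.
pose i : 'I_n := Ordinal hm.
have vi : nat_of_ord i = m by [].
have hi2 : (2 <= i)%N by rewrite vi; lia.
have n0 : (0 < n)%N by lia.
have n1 : (1 < n)%N by lia.
pose a : 'I_n := Ordinal n0.
pose b : 'I_n := Ordinal n1.
have va : nat_of_ord a = 0%N by [].
have vb : nat_of_ord b = 1%N by [].
pose k := (v^-1)%g i.
have hvk : v k = i by rewrite /k permKV.
have hk : (k <= m)%N.
  rewrite leqNgt; apply/negP => h.
  have := hfix k h; rewrite hvk => e.
  rewrite -e vi in h; lia.
have -> : m.+1 = i.+1 by [].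
case: (eqVneq k i) => hki.
  have hfixm : forall x : 'I_n, (m <= x)%N -> v x = x.
    move=> x hx; case: (eqVneq x i) => [->|ne].
      by rewrite -{1}hki hvk.
    apply: hfix.
    have : nat_of_ord x != nat_of_ord i by rewrite ord_eqn.
    lia.
  have [f [hf ->]] := IH (ltnW hmn) v hv hfixm.
  exists (fun j => if j == i then 1 else f j); split.
    by move=> j hj; case: ifP => _; [rewrite inE eqxx | exact: hf].
  rewrite (Pm_step _ hi2) eqxx mul1g /Pm; apply: eq_big_seq => j.
  rewrite mem_Dm => /andP[_ hj]; case: eqP => // e; rewrite e vi in hj; lia.
have hklt : (k < i)%N.
  have : nat_of_ord k != nat_of_ord i by rewrite ord_eqn.
  lia.
pose r := tperm k i * tperm a b.
pose w := r^-1 * v.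
have hw : ~~ odd_perm w.
  rewrite /w odd_permM odd_permV odd_permM !odd_tperm hki /=.
  by rewrite (negbTE hv).
have hwfix : forall x : 'I_n, (m <= x)%N -> w x = x.
  move=> x hx; rewrite /w /r permM invMg permM !tpermV.
  have ea : tperm a b x = x by apply: tpermD; apply: neq_ord; lia.
  rewrite ea; case: (eqVneq x i) => [->|ne].
    by rewrite tpermR.
  have : nat_of_ord x != nat_of_ord i by rewrite ord_eqn.
  move=> ne'.
  rewrite tpermD; last by rewrite eq_sym.
    apply: hfix; lia.
  apply: neq_ord; lia.
have [g [hg hw']] := IH (ltnW hmn) w hw hwfix.
exists (fun j => if j == i then r else g j); split.
  move=> j hj; case: ifP => [/eqP ->|_]; last exact: hg.
  rewrite inE; apply/orP; right; apply/existsP; exists k; apply/existsP; exists a.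
  apply/existsP; exists b.
  by apply/and4P; split; [exact: hklt | by [] | by [] | by []].
rewrite (Pm_step _ hi2) eqxx.
have -> : Pm i (fun j => if j == i then r else g j) = Pm i g.
  rewrite /Pm; apply: eq_big_seq => j.
  rewrite mem_Dm => /andP[_ hj]; case: eqP => // e; rewrite e vi in hj; lia.
have -> : Pm i g = w by rewrite hw'.
by rewrite /w mulKVg.
Qed.

Lemma Rset_inj n (i : 'I_n) r1 r2 : (2 <= i)%N -> r1 \in Rset i -> r2 \in Rset i ->
  (r1^-1)%g i = (r2^-1)%g i -> r1 = r2.
Proof.
move=> hi.
have inv_i : forall k a b : 'I_n, (k < i)%N -> (val a == 0)%N -> (val b == 1)%N ->
    ((tperm k i * tperm a b)^-1)%g i = k.
  move=> k a b hk ha hb; rewrite /= in ha hb.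
  rewrite invMg !tpermV permM (@tpermD _ a b i) ?tpermR //; apply: neq_ord; lia.
rewrite !inE => /orP[/eqP->|/existsP[k1 /existsP[a1 /existsP[b1 /and4P[hk1 ha1 hb1 /eqP->]]]]]
   /orP[/eqP->|/existsP[k2 /existsP[a2 /existsP[b2 /and4P[hk2 ha2 hb2 /eqP->]]]]].
- by [].
- rewrite invg1 perm1 inv_i // => e; rewrite -e in hk2; lia.
- rewrite invg1 perm1 inv_i // => e; rewrite e in hk1; lia.
- rewrite !inv_i // => e; subst k2; rewrite /= in ha1 hb1 ha2 hb2.
  have -> : a1 = a2 by apply: val_inj => /=; lia.
  have -> : b1 = b2 by apply: val_inj => /=; lia.
  by [].
Qed.

Lemma uniq_m n m : (m <= n)%N -> forall f g : 'I_n -> {perm 'I_n},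
  (forall i : 'I_n, (2 <= i)%N -> f i \in Rset i) ->
  (forall i : 'I_n, (2 <= i)%N -> g i \in Rset i) ->
  Pm m f = Pm m g -> forall j : 'I_n, (2 <= j)%N -> (j < m)%N -> f j = g j.
Proof.
elim: m => [|m IH] hmn f g hf hg e j hj hjm; first lia.
case: (leqP m.+1 2) => h2; first lia.
have hm : (m < n)%N by lia.
pose i : 'I_n := Ordinal hm.
have vi : nat_of_ord i = m by [].
have hi2 : (2 <= i)%N by rewrite vi; lia.
have em : m.+1 = i.+1 by []. rewrite em in e.
rewrite !(Pm_step _ hi2) in e.
have hPf : Pm i f i = i by apply: Pm_fix.
have hPg : Pm i g i = i by apply: Pm_fix.
have key : f i = g i.
  apply: (Rset_inj hi2 (hf _ hi2) (hg _ hi2)).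
  have := congr1 (fun s : {perm 'I_n} => (s^-1)%g i) e.
  rewrite /= !invMg !permM.
  have -> : ((Pm i f)^-1)%g i = i by apply: (canLR (permK _)); rewrite hPf.
  by have -> : ((Pm i g)^-1)%g i = i by apply: (canLR (permK _)); rewrite hPg.
rewrite key in e; move/mulgI: e => e.
case: (eqVneq j i) => [->//|ne].
apply: (IH (ltnW hmn) f g hf hg e j hj).
have : nat_of_ord j != nat_of_ord i by rewrite ord_eqn.
lia.
Qed.

Theorem theorem4p2 (n : nat) (hn : (3 <= n)%N) (v : {perm 'I_n}) (hv : ~~ odd_perm v) :
  (exists f : 'I_n -> {perm 'I_n},
      (forall i : 'I_n, (2 <= val i)%N -> f i \in Rset i) /\ v = paper_prod f) /\
  (forall f g : 'I_n -> {perm 'I_n},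
      (forall i : 'I_n, (2 <= val i)%N -> f i \in Rset i) ->
      (forall i : 'I_n, (2 <= val i)%N -> g i \in Rset i) ->
      v = paper_prod f -> v = paper_prod g ->
      forall i : 'I_n, (2 <= val i)%N -> f i = g i).
Proof.
split.
  have hfx : forall x : 'I_n, (n <= x)%N -> v x = x by move=> x; rewrite leqNgt ltn_ord.
  have [f [hf ->]] := exist_m (leqnn n) hv hfx.
  by exists f; rewrite paper_Pm.
move=> f g hf hg ef eg i hi.
apply: (uniq_m (leqnn n) hf hg _ hi (ltn_ord i)).
by rewrite -!paper_Pm -ef -eg.
Qed.
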